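(* Let $\mathcal N(G,\pi,\mathbf p)$ be any feedforward network with shared weights and ReLU activations, and let $L$ be an objective depending on $\mathbf p$ only through the computed function $f_{\mathbf p}$. Consider the update rule $$p^{(t+1)}_{i} = p^{(t)}_{i} - \frac{\eta}{\kappa_{i}(\mathbf p^{(t)})} \frac{\partial L}{\partial p_{i}}(\mathbf p^{(t)}),\qquad \kappa_{i}(\mathbf p)=\frac{1}{2}\frac{\partial^2 \gamma^2_{\rm net}(\mathbf p)}{\partial p^2_{i}}.$$ This update is invariant to all feasible node-wise rescalings. Moreover, the simpler update rule obtained by using $\kappa^{(1)}_i(\mathbf p)$ in place of $\kappa_i(\mathbf p)$ is also invariant to all feasible node-wise rescalings.
   Context: A feedforward network with shared weights $\mathcal N(G,\pi,\mathbf p)$: $G=(V,E)$ is a directed acyclic graph with input nodes $V_{\rm in}$ and output nodes $V_{\rm out}$, $\mathbf p\in\mathbb R^m$, $\pi:E\to\{1,\dots,m\}$, edge $e$ has weight $w_e=p_{\pi(e)}$, and $E_i=\{e:\pi(e)=i\}$. Input nodes output the corresponding input coordinate; internal nodes compute $h_v=[\sum_{(u\to v)\in E}w_{u\to v}h_u]_+$ with $[z]_+=\max(z,0)$; output nodes compute $h_v=\sum_{(u\to v)\in E}w_{u\to v}h_u$; $f_{\mathbf p}$ is the resulting function. $\mathcal P$ is the set of directed paths $\zeta=(\zeta_0,\dots,\zeta_{\text{len}(\zeta)})$ from input to output nodes, and $\gamma^2_{\rm net}(\mathbf p)=\sum_{\zeta\in\mathcal P}\prod_{j=0}^{\text{len}(\zeta)-1}p^2_{\pi(\zeta_j\to\zeta_{j+1})}$.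 Also $\kappa^{(1)}_{i}(\mathbf p) = \sum_{e\in E_i}\sum_{\zeta \in \mathcal{P}} \mathbf 1_{e\in \zeta} \prod_{j:\, e\neq (\zeta_j\rightarrow \zeta_{j+1})} p^2_{\pi(\zeta_j\rightarrow \zeta_{j+1})}$. A node-wise rescaling is given by $\beta_v>0$ for internal nodes ($\beta_v=1$ for input and output nodes) and maps $w_{u\to v}\mapsto(\beta_v/\beta_u)w_{u\to v}$; it is feasible if edges sharing a parameter remain equal after the transformation, so it induces a transformation $\mathcal T$ of the parameter vector. An update rule $\mathcal A$ (mapping $\mathbf p^{(t)}$ to $\mathbf p^{(t+1)}$) is invariant to $\mathcal T$ if $f_{\mathcal A(\mathbf p)}=f_{\mathcal A(\mathcal T(\mathbf p))}$ for every $\mathbf p$. *)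

(* Defs.v *)
From HB Require Import structures.
From mathcomp Require Import all_boot all_order all_algebra.
From mathcomp Require Import all_classical all_reals all_analysis.
Set Implicit Arguments. Unset Strict Implicit. Unset Printing Implicit Defensive.
Import Order.TTheory GRing.Theory Num.Theory.
Local Open Scope ring_scope.

Definition acyclic (V : finType) (E : rel V) : Prop :=
  forall (x : V) (s : seq V), path E x s -> last x s = x -> s = [::].

Definition upd (R : Type) (m : nat) (p : 'I_m -> R) (i : 'I_m) (t : R) : 'I_m -> R :=
  fun j => if j == i then t else p j.

Definition partial (R : realType) (m : nat) (F : ('I_m -> R) -> R)
  (p : 'I_m -> R) (i : 'I_m) : R :=
  derive1 (fun t => F (upd p i t)) (p i).

Definition partial2 (R : realType) (m : nat) (F : ('I_m -> R) -> R)
  (p : 'I_m -> R) (i : 'I_m) : R :=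
  derive1 (fun s => partial F (upd p i s) i) (p i).

Section Net.
Variables (R : realType) (V : finType) (E : rel V) (Vin Vout : {set V})
          (m : nat) (pi : V -> V -> 'I_m).

Definition weight (p : 'I_m -> R) (e : V * V) : R := p (pi e.1 e.2).

Definition hstep (p : 'I_m -> R) (x : V -> R) (h : V -> R) (v : V) : R :=
  if v \in Vin then x v
  else let z := \sum_(u : V | E u v) weight p (u, v) * h u in
       if v \in Vout then z else Num.max z 0.

(* node outputs h_v (stable after #|V| steps, since G is acyclic) *)
Definition hnet (p : 'I_m -> R) (x : V -> R) : V -> R :=
  iter #|V| (hstep p x) (fun _ => 0).

(* the computed function f_p : inputs (values on Vin) -> outputs (values on Vout) *)
Definition netfun (p : 'I_m -> R) : (V -> R) -> (V -> R) :=
  fun x v => if v \in Vout then hnet p x v else 0.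

Definition io_path (s : seq V) : bool :=
  if s is x :: s' then [&& x \in Vin, last x s' \in Vout & path E x s'] else false.

Definition pedges (s : seq V) : seq (V * V) := zip s (behead s).

(* sum over the set P of input-output paths (a path in a DAG has at most #|V| nodes) *)
Definition pathsum (F : seq V -> R) : R :=
  \sum_(k < #|V|) \sum_(t : k.+1.-tuple V | io_path t) F t.

Definition gamma2 (p : 'I_m -> R) : R :=
  pathsum (fun s => \prod_(e <- pedges s) (weight p e) ^+ 2).

Definition kappa (p : 'I_m -> R) (i : 'I_m) : R :=
  2^-1 * partial2 gamma2 p i.

Definition kappa1 (p : 'I_m -> R) (i : 'I_m) : R :=
  \sum_(e : V * V | E e.1 e.2 && (pi e.1 e.2 == i))
    pathsum (fun s => if e \in pedges s then
                        \prod_(e' <- pedges s | e' != e) (weight p e') ^+ 2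
                      else 0).

Definition rescaling (beta : V -> R) : Prop :=
  (forall v, 0 < beta v) /\ (forall v, (v \in Vin) || (v \in Vout) -> beta v = 1).

Definition feasible (beta : V -> R) : Prop :=
  forall (p : 'I_m -> R) (u v u' v' : V), E u v -> E u' v' -> pi u v = pi u' v' ->
    beta v / beta u * weight p (u, v) = beta v' / beta u' * weight p (u', v').

Definition induced_by (beta : V -> R) (T : ('I_m -> R) -> ('I_m -> R)) : Prop :=
  forall (p : 'I_m -> R) (u v : V), E u v -> T p (pi u v) = beta v / beta u * p (pi u v).

Definition net_invariant (A T : ('I_m -> R) -> ('I_m -> R)) : Prop :=
  forall p, netfun (A p) = netfun (A (T p)).

End Net.

Definition update (R : realType) (m : nat) (k : ('I_m -> R) -> 'I_m -> R)
  (L : ('I_m -> R) -> R) (eta : R) (p : 'I_m -> R) : 'I_m -> R :=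
  fun i => p i - eta / k p i * partial L p i.

(* Main.v *)
Require Import Defs.
From HB Require Import structures.
From mathcomp Require Import all_boot all_order all_algebra.
From mathcomp Require Import all_classical all_reals all_analysis.
From mathcomp Require Import ring.
Import Order.TTheory GRing.Theory Num.Theory.
Local Open Scope ring_scope.

Section Helpers.
Variable R : realType.

Lemma der_mulc (c x : R) : derivable (fun t : R => t * c) x 1.
Proof. by apply: derivableM; [exact: derivable_id | exact: derivable_cst]. Qed.

Lemma derive1_mulc (c x : R) : derive1 (fun t : R => t * c) x = c.
Proof. by rewrite (@derive1Mr _ id) ?derive1E ?derive_id ?mul1r //; exact: derivable_id. Qed.

Lemma derivable_sc (f : R -> R) (c x : R) : derivable f (x * c) 1 ->
  derivable (fun t : R => f (t * c)) x 1.
Proof.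
move=> /derivable1_diffP df; apply/derivable1_diffP.
have -> : (fun t : R => f (t * c)) = f \o (fun t => t * c) by [].
apply: differentiable_comp => //; exact/derivable1_diffP/der_mulc.
Qed.

Lemma derive1_sc (f : R -> R) (c x : R) : derivable f (x * c) 1 ->
  derive1 (fun t : R => f (t * c)) x = derive1 f (x * c) * c.
Proof.
move=> df.
have -> : (fun t : R => f (t * c)) = f \o (fun t => t * c) by [].
by rewrite derive1_comp ?derive1_mulc //; exact: der_mulc.
Qed.

Lemma upd_upd (m : nat) (q : 'I_m -> R) j s t : upd (upd q j s) j t = upd q j t.
Proof. by apply/funext => k; rewrite /upd; case: eqP. Qed.

Lemma upd_same (m : nat) (q : 'I_m -> R) j s : upd q j s j = s.
Proof. by rewrite /upd eqxx. Qed.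

Lemma partial2E (m : nat) (F : ('I_m -> R) -> R) q j :
  partial2 F q j = derive1 (fun s => derive1 (fun t => F (upd q j t)) s) (q j).
Proof.
have h : (fun s => partial F (upd q j s) j) = (fun s => derive1 (fun t => F (upd q j t)) s).
  apply/funext => s; rewrite /partial upd_same.
  have -> : (fun t => F (upd (upd q j s) j t)) = (fun t => F (upd q j t)).
    by apply/funext => t; rewrite upd_upd.
  by [].
by rewrite /partial2 h.
Qed.

End Helpers.

Section Main.
Variables (R : realType) (V : finType) (E : rel V) (Vin Vout : {set V})
  (m : nat) (pi : V -> V -> 'I_m) (beta : V -> R)
  (T : ('I_m -> R) -> ('I_m -> R)).
Hypothesis hacyc : acyclic E.
Hypothesis hbpos : forall v, 0 < beta v.
Hypothesis hb1 : forall v, (v \in Vin) || (v \in Vout) -> beta v = 1.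
Hypothesis hfeas : feasible E pi beta.
Hypothesis hT : induced_by E pi beta T.

Definition rr (e : V * V) : R := beta e.2 / beta e.1.
Definition agree (q q' : 'I_m -> R) := forall u v, E u v -> q (pi u v) = q' (pi u v).

Lemma rr_neq0 e : rr e != 0.
Proof. by rewrite /rr gt_eqF // divr_gt0. Qed.

Lemma rr_eq u v u' v' : E u v -> E u' v' -> pi u v = pi u' v' -> rr (u, v) = rr (u', v').
Proof. by move=> a b c; have := @hfeas (fun _ => 1) _ _ _ _ a b c; rewrite /weight !mulr1. Qed.

Lemma hT' q u v : E u v -> T q (pi u v) = rr (u, v) * q (pi u v).
Proof. exact: hT. Qed.

Lemma netfun_agree q q' : agree q q' -> netfun E Vin Vout pi q = netfun E Vin Vout pi q'.
Proof.
move=> h.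
have hs : hstep E Vin Vout pi q = hstep E Vin Vout pi q'.
  apply/funext => x; apply/funext => g; apply/funext => v; rewrite /hstep.
  case: ifP => // _.
  have -> : \sum_(u | E u v) weight pi q (u, v) * g u
         = \sum_(u | E u v) weight pi q' (u, v) * g u.
    by apply: eq_bigr => u Euv; rewrite /weight /= h.
  by [].
by rewrite /netfun /hnet hs.
Qed.

Lemma hnet_T q x n v :
  iter n (hstep E Vin Vout pi (T q) x) (fun _ => 0) v
  = beta v * iter n (hstep E Vin Vout pi q x) (fun _ => 0) v.
Proof.
elim: n v => [|n IH] v /=; first by rewrite mulr0.
rewrite /hstep; case: ifP => vin; first by rewrite hb1 ?vin // mul1r.
have hz : \sum_(u | E u v) weight pi (T q) (u, v) * iter n (hstep E Vin Vout pi (T q) x) (fun _ => 0) u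
   = beta v * \sum_(u | E u v) weight pi q (u, v) * iter n (hstep E Vin Vout pi q x) (fun _ => 0) u.
  rewrite big_distrr; apply: eq_bigr => u Euv; rewrite /weight /= hT' // IH /rr /=.
  have bu : beta u != 0 by rewrite gt_eqF.
  by field.
rewrite hz; case: ifP => // _.
by rewrite maxr_pMr ?mulr0 // ltW.
Qed.

Lemma netfun_T q : netfun E Vin Vout pi (T q) = netfun E Vin Vout pi q.
Proof.
apply/funext => x; apply/funext => v; rewrite /netfun /hnet.
by case: ifP => vo //; rewrite hnet_T hb1 ?vo ?orbT // mul1r.
Qed.

Lemma path_edges x s : path E x s -> forall e, e \in pedges (x :: s) -> E e.1 e.2.
Proof.
elim: s x => [|y s IH] x //= /andP [exy ps] e.
rewrite inE => /orP [/eqP -> //|]; exact: IH.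
Qed.

Lemma io_edges (s : seq V) e : io_path E Vin Vout s -> e \in pedges s -> E e.1 e.2.
Proof. by case: s => // x s /and3P [_ _ ps]; apply: path_edges. Qed.

Lemma telescope x s : path E x s -> \prod_(e <- pedges (x :: s)) rr e = beta (last x s) / beta x.
Proof.
elim: s x => [|y s IH] x /=.
  by rewrite big_nil divff // gt_eqF.
move=> /andP [_ ps]; rewrite big_cons (IH _ ps) /rr /=.
have bx : beta x != 0 by rewrite gt_eqF.
have b_y : beta y != 0 by rewrite gt_eqF.
by rewrite mulrC mulrA divfK.
Qed.

Lemma io_tele (s : seq V) : io_path E Vin Vout s -> \prod_(e <- pedges s) rr e = 1.
Proof.
case: s => // x s /and3P [xi lo ps]; rewrite telescope // !hb1 ?xi ?lo ?orbT //.
by rewrite divr1.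
Qed.

Lemma uniq_path x s : path E x s -> uniq (x :: s).
Proof.
elim: s x => [|y s IH] x //= /andP [exy ps].
have := IH y ps => /= ->; rewrite andbT; apply/negP => xin.
have : path E x (y :: s) by rewrite /= exy.
case/splitPr: xin => p1 p2; rewrite cat_path /= => /andP [pp1 /andP [elx _]].
have := hacyc x (rcons p1 x); rewrite rcons_path pp1 elx last_rcons.
by move=> /(_ isT erefl); case: p1 {pp1 elx}.
Qed.

Lemma pedges_fst (s : seq V) e : e \in pedges s -> e.1 \in s.
Proof.
elim: s => [|x s IH] //; case: s IH => [|y s] IH //=.
rewrite inE => /orP [/eqP -> //=|/IH]; first by rewrite inE eqxx.
by move=> h; rewrite inE h orbT.
Qed.

Lemma uniq_pedges (s : seq V) : uniq s -> uniq (pedges s).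
Proof.
elim: s => [|x s IH] //; case: s IH => [|y s] IH //= /andP [nx us].
have -> /= : (x, y) \notin pedges (y :: s).
  by apply/negP => /pedges_fst /= h; rewrite h in nx.
exact: IH.
Qed.

Lemma io_uniq (s : seq V) : io_path E Vin Vout s -> uniq (pedges s).
Proof. by case: s => // x s /and3P [_ _ ps]; apply/uniq_pedges/uniq_path. Qed.

Lemma gamma2_agree q q' : agree q q' -> gamma2 E Vin Vout pi q = gamma2 E Vin Vout pi q'.
Proof.
move=> h; rewrite /gamma2 /pathsum; apply: eq_bigr => k _; apply: eq_bigr => t io.
apply: eq_big_seq => e ein; rewrite /weight h //; exact: io_edges ein.
Qed.

Lemma gamma2_T q : gamma2 E Vin Vout pi (T q) = gamma2 E Vin Vout pi q.
Proof.
rewrite /gamma2 /pathsum; apply: eq_bigr => k _; apply: eq_bigr => t io.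
rewrite (eq_big_seq (fun e => rr e ^+ 2 * weight pi q e ^+ 2)); last first.
  move=> [u v] ein /=; rewrite /weight /= hT' ?exprMn //; by have := io_edges _ _ io ein.
by rewrite big_split /= prodrXl io_tele // expr1n mul1r.
Qed.

Lemma gamma2_poly q j : exists P : {poly R},
  forall t, gamma2 E Vin Vout pi (upd q j t) = P.[t].
Proof.
exists (\sum_(k < #|V|) \sum_(t : k.+1.-tuple V | io_path E Vin Vout t)
   \prod_(e <- pedges t) (if pi e.1 e.2 == j then 'X else (q (pi e.1 e.2))%:P) ^+ 2).
move=> x; rewrite /gamma2 /pathsum horner_sum; apply: eq_bigr => k _.
rewrite horner_sum; apply: eq_bigr => t _; rewrite horner_prod; apply: eq_bigr => e _.
rewrite horner_exp /weight /upd; case: eqP => _; by rewrite ?hornerX ?hornerC.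
Qed.

Lemma agree_upd p u v t : E u v ->
  agree (upd (T p) (pi u v) t) (T (upd p (pi u v) (t / rr (u, v)))).
Proof.
move=> Euv u' v' E'; rewrite hT' // /upd; case: eqP => h.
  by rewrite (rr_eq _ _ _ _ E' Euv h) mulrC divfK // rr_neq0.
by rewrite hT'.
Qed.

Lemma dL (L : ('I_m -> R) -> R)
  (hLf : forall p q, netfun E Vin Vout pi p = netfun E Vin Vout pi q -> L p = L q)
  (hLd : forall (p : 'I_m -> R) (i : 'I_m), derivable (fun t => L (upd p i t)) (p i) 1)
  p u v : E u v ->
  partial L (T p) (pi u v) = partial L p (pi u v) / rr (u, v).
Proof.
move=> Euv; rewrite /partial.
have -> : (fun t => L (upd (T p) (pi u v) t)) =
          (fun t => (fun s => L (upd p (pi u v) s)) (t * (rr (u, v))^-1)).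
  apply/funext => t; apply: hLf; rewrite (netfun_agree _ _ (agree_upd _ _ _ _ Euv)).
  by rewrite netfun_T.
rewrite hT' // (derive1_sc _ (fun s => L (upd p (pi u v) s))) (mulrC (rr _)) mulfK ?rr_neq0 //.
Qed.

Lemma kappa_T p u v : E u v ->
  kappa E Vin Vout pi (T p) (pi u v) = kappa E Vin Vout pi p (pi u v) / rr (u, v) ^+ 2.
Proof.
move=> Euv; rewrite /kappa !partial2E.
set j := pi u v; set c := rr (u, v).
have [P hP] := gamma2_poly p j.
have hg : (fun t => gamma2 E Vin Vout pi (upd p j t)) = horner P by apply/funext.
have hgT : (fun t => gamma2 E Vin Vout pi (upd (T p) j t)) = (fun t => P.[t * c^-1]).
  apply/funext => t; rewrite (gamma2_agree _ _ (agree_upd _ _ _ _ Euv)) gamma2_T; exact: hP.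
rewrite hg hgT.
have h1 : (fun s => derive1 (fun t => P.[t * c^-1]) s) = (fun s => P^`().[s * c^-1] * c^-1).
  apply/funext => s; rewrite (derive1_sc _ (horner P)) ?derivE //; exact: derivable_horner.
rewrite h1 derive1Mr; last by apply: (derivable_sc _ (horner P^`())); exact: derivable_horner.
rewrite (derive1_sc _ (horner P^`())); last exact: derivable_horner.
have -> : (fun s => derive1 (horner P) s) = horner P^`() by rewrite derivE.
rewrite hT' // (mulrC c) mulfK ?rr_neq0 //.
have c0 : c != 0 by exact: rr_neq0.
rewrite /j -/c; clearbody c; by rewrite expr2 invfM !mulrA.
Qed.

Lemma kappa1_T p u v : E u v ->
  kappa1 E Vin Vout pi (T p) (pi u v) = kappa1 E Vin Vout pi p (pi u v) / rr (u, v) ^+ 2.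
Proof.
move=> Euv; rewrite /kappa1 big_distrl; apply: eq_bigr => e /andP [Ee /eqP pie].
have re : rr e = rr (u, v) by case: e Ee pie => a b Ee pie; exact: rr_eq.
rewrite /pathsum big_distrl; apply: eq_bigr => k _; rewrite big_distrl.
apply: eq_bigr => t io; rewrite /=; case: ifP => ein; last by rewrite mul0r.
rewrite big_seq_cond.
rewrite (eq_bigr (fun e' => rr e' ^+ 2 * weight pi p e' ^+ 2)); last first.
  move=> [a b] /andP [abin _]; rewrite /weight /= hT' ?exprMn //.
  by have := io_edges _ _ io abin.
rewrite -big_seq_cond big_split /= prodrXl.
have hP : \prod_(e' <- pedges t | e' != e) rr e' = (rr e)^-1.
  have := io_tele _ io; rewrite (bigD1_seq e) ?(io_uniq _ io) //= => h.
  by apply: (mulfI (rr_neq0 e)); rewrite h mulfV ?rr_neq0.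
rewrite hP re.
have c0 : rr (u, v) != 0 by exact: rr_neq0.
by rewrite exprVn mulrC.
Qed.

Lemma invariant_gen (k : ('I_m -> R) -> 'I_m -> R) L eta
  (hLf : forall p q, netfun E Vin Vout pi p = netfun E Vin Vout pi q -> L p = L q)
  (hLd : forall (p : 'I_m -> R) (i : 'I_m), derivable (fun t => L (upd p i t)) (p i) 1)
  (hk : forall p u v, E u v -> k (T p) (pi u v) = k p (pi u v) / rr (u, v) ^+ 2) :
  net_invariant E Vin Vout pi (update k L eta) T.
Proof.
move=> p; rewrite -[LHS](netfun_T); apply: netfun_agree => u v Euv.
rewrite hT' // /update hk // (dL _ hLf hLd) // hT'.
have c0 : rr (u, v) != 0 by exact: rr_neq0.
rewrite invf_div.
set K := (k p (pi u v))^-1.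
  by field. exact: Euv.
Qed.

End Main.

Theorem theorem2 (R : realType) (V : finType) (E : rel V) (Vin Vout : {set V})
  (m : nat) (pi : V -> V -> 'I_m)
  (hacyc : acyclic E)
  (hdisj : [disjoint Vin & Vout])
  (hin : forall u v, E u v -> v \notin Vin)
  (hout : forall u v, E u v -> u \notin Vout)
  (L : ('I_m -> R) -> R)
  (hLf : forall p q, netfun E Vin Vout pi p = netfun E Vin Vout pi q -> L p = L q)
  (hLd : forall (p : 'I_m -> R) (i : 'I_m), derivable (fun t => L (upd p i t)) (p i) 1)
  (eta : R) (heta : 0 < eta)
  (beta : V -> R) (T : ('I_m -> R) -> ('I_m -> R))
  (hbeta : rescaling Vin Vout beta)
  (hfeas : feasible E pi beta)
  (hT : induced_by E pi beta T) :
  net_invariant E Vin Vout pi (update (kappa E Vin Vout pi) L eta) T /\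
  net_invariant E Vin Vout pi (update (kappa1 E Vin Vout pi) L eta) T.
Proof.
case: hbeta => hbpos hb1.
split; apply: invariant_gen => // p u v Euv.
- exact: kappa_T.
- exact: kappa1_T.
Qed.
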